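(* Let $a>1$, $k\in\mathbb{N}$, $C_j(n,a)=\binom{n}{j}\left(\frac{1+a}{2}\right)^{n-j}\left(\frac{1-a}{2}\right)^j$, $b_j=-\frac{i}{\sqrt2}(1-\frac{2j}{n})$, $b=-\frac{ia}{\sqrt2}$ and $e_k(z)=z^k/\sqrt{k!}$. Then for every $z\in\mathbb{C}$, $$\lim_{n\to\infty}\sum_{j=0}^nC_j(n,a)\mathcal{W}_{b_j}[e_k](z)=\mathcal{W}_b[e_k](z).$$
   Context: For $c\in\mathbb{C}$ the Weyl operator on the Fock space is $\mathcal{W}_cf(z)=f(z-c)e^{z\bar c-|c|^2/2}$. *)

(* Defs.v *)
From Stdlib Require Import Reals.
From Coquelicot Require Import Coquelicot.
Open Scope R_scope.

Definition Cexp (z : Complex.C) : Complex.C :=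
  (exp (Re z) * cos (Im z), exp (Re z) * sin (Im z)).

Definition Weyl (c : Complex.C) (f : Complex.C -> Complex.C) (z : Complex.C)
  : Complex.C :=
  Cmult (f (Cminus z c))
        (Cexp (Cminus (Cmult z (Cconj c)) (RtoC ((Cmod c) ^ 2 / 2)))).

Definition e_k (k : nat) (z : Complex.C) : Complex.C :=
  Cdiv (pow_n z k) (RtoC (sqrt (INR (Factorial.fact k)))).

Definition Ccoef (n j : nat) (a : R) : R :=
  Binomial.C n j * ((1 + a) / 2) ^ (n - j) * ((1 - a) / 2) ^ j.

Definition bj (n j : nat) : Complex.C :=
  (0, - (1 - 2 * INR j / INR n) / sqrt 2).

Definition bval (a : R) : Complex.C := (0, - a / sqrt 2).

(* Main.v *)
Require Import Defs.
From Stdlib Require Import Reals Lra Lia Arith.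
From Coquelicot Require Import Coquelicot.
Open Scope R_scope.


Definition pp (a : R) := (1 + a) / 2.
Definition qq (a : R) := (1 - a) / 2.

Definition U (a : R) (n : nat) (f : R -> R) : R :=
  sum_f_R0 (fun j => Binomial.C n j * pp a ^ (n - j) * qq a ^ j * f (INR n - 2 * INR j)) n.

Lemma pascal_sum (n : nat) (h : nat -> R) :
  sum_f_R0 (fun j => Binomial.C (S n) j * h j) (S n) =
  sum_f_R0 (fun j => Binomial.C n j * h j) n + sum_f_R0 (fun j => Binomial.C n j * h (S j)) n.
Proof.
  destruct n as [|m].
  - simpl. rewrite (C_n_0 1), (C_n_n 1), (C_n_0 0). ring.
  - rewrite (decomp_sum _ (S (S m))) by lia.
    rewrite (decomp_sum (fun j => Binomial.C (S m) j * h j) (S m)) by lia.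
    simpl pred.
    rewrite tech5. rewrite (tech5 (fun j => Binomial.C (S m) j * h (S j)) m).
    rewrite (sum_eq (fun i => Binomial.C (S (S m)) (S i) * h (S i))
               (fun i => Binomial.C (S m) i * h (S i) + Binomial.C (S m) (S i) * h (S i))).
    2:{ intros i Hi. rewrite <- pascal by lia. ring. }
    rewrite plus_sum. rewrite !C_n_0, !C_n_n. ring.
Qed.

Lemma U_ext a n f g : (forall x, f x = g x) -> U a n f = U a n g.
Proof. intros H. unfold U. apply sum_eq. intros i _. rewrite H. reflexivity. Qed.

Lemma U_S a n f :
  U a (S n) f = U a n (fun x => pp a * f (x + 1) + qq a * f (x - 1)).
Proof.
  unfold U.
  set (h := fun j => pp a ^ (S n - j) * qq a ^ j * f (INR (S n) - 2 * INR j)).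
  rewrite (sum_eq _ (fun j => Binomial.C (S n) j * h j)).
  2:{ intros i _. unfold h. ring. }
  rewrite pascal_sum. rewrite <- plus_sum. apply sum_eq. intros j Hj.
  unfold h.
  replace (S n - j)%nat with (S (n - j)) by lia.
  replace (S n - S j)%nat with (n - j)%nat by lia.
  replace (INR (S n) - 2 * INR j) with (INR n - 2 * INR j + 1) by (rewrite S_INR; ring).
  replace (INR (S n) - 2 * INR (S j)) with (INR n - 2 * INR j - 1) by (rewrite !S_INR; ring).
  simpl. ring.
Qed.

Lemma U_0 a f : U a 0 f = f 0.
Proof. unfold U. simpl. rewrite C_n_0. replace (0 - 2 * 0) with 0 by ring. ring. Qed.

Lemma U_scal a n c f : U a n (fun x => c * f x) = c * U a n f.
Proof. unfold U. rewrite scal_sum. apply sum_eq. intros; ring. Qed.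

Lemma U_sum a n (g : nat -> R -> R) e :
  U a n (fun x => sum_f_R0 (fun i => g i x) e) = sum_f_R0 (fun i => U a n (g i)) e.
Proof.
  induction e as [|e IH].
  - simpl. reflexivity.
  - simpl. rewrite <- IH. unfold U. rewrite <- plus_sum. apply sum_eq. intros; ring.
Qed.

Definition NN a n e := U a n (fun x => x ^ e).
Definition eps a r := pp a + qq a * (-1) ^ r.

Lemma NN_S a n e :
  NN a (S n) e = sum_f_R0 (fun i => Binomial.C e i * NN a n i * eps a (e - i)) e.
Proof.
  unfold NN. rewrite U_S.
  rewrite (U_ext _ _ _ (fun x => sum_f_R0 (fun i => (Binomial.C e i * eps a (e - i)) * x ^ i) e)).
  - rewrite U_sum. apply sum_eq. intros i _. rewrite U_scal. ring.
  - intros x. replace (x - 1) with (x + -1) by ring.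
    rewrite !binomial. rewrite !scal_sum. rewrite <- plus_sum. apply sum_eq.
    intros i _. unfold eps. rewrite pow1. ring.
Qed.

Lemma m1pow r : (-1) ^ r = 1 \/ (-1) ^ r = -1.
Proof. induction r; simpl; [left; ring| destruct IHr as [H|H]; rewrite H; [right|left]; ring]. Qed.

Lemma eps_0 a : eps a 0 = 1.
Proof. unfold eps, pp, qq. simpl. field. Qed.
Lemma eps_1 a : eps a 1 = a.
Proof. unfold eps, pp, qq. simpl. field. Qed.

Lemma eps_bnd a r : 1 < a -> 0 <= eps a r <= a ^ r.
Proof.
  intros Ha. destruct r as [|r].
  - rewrite eps_0. simpl. lra.
  - assert (a <= a ^ S r) by (rewrite <- (pow_1 a) at 1; apply Rle_pow; lia || lra).
    unfold eps, pp, qq. destruct (m1pow (S r)) as [H1|H1]; rewrite H1; lra.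
Qed.

Lemma C_nonneg e i : 0 <= Binomial.C e i.
Proof.
  unfold Binomial.C. apply Rmult_le_pos. left; apply INR_fact_lt_0.
  left; apply Rinv_0_lt_compat, Rmult_lt_0_compat; apply INR_fact_lt_0.
Qed.

Lemma NN_0 a e : NN a 0 e = 0 ^ e.
Proof. unfold NN. rewrite U_0. reflexivity. Qed.

Lemma NN_nonneg a n e : 1 < a -> 0 <= NN a n e.
Proof.
  intros Ha. revert e. induction n as [|n IH]; intros e.
  - rewrite NN_0. apply pow_le. lra.
  - rewrite NN_S. apply cond_pos_sum. intros i.
    apply Rmult_le_pos; [apply Rmult_le_pos|]; auto using C_nonneg.
    apply eps_bnd; auto.
Qed.

Lemma NN_upper a n e : 1 < a -> NN a n e <= a ^ e * INR n ^ e.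
Proof.
  intros Ha. revert e. induction n as [|n IH]; intros e.
  - rewrite NN_0. destruct e; simpl; lra.
  - rewrite NN_S. rewrite <- Rpow_mult_distr.
    replace (a * INR (S n)) with (a * INR n + a) by (rewrite S_INR; ring).
    rewrite binomial. apply sum_Rle. intros i Hi.
    rewrite Rpow_mult_distr.
    apply Rmult_le_compat.
    + apply Rmult_le_pos; [apply C_nonneg| apply NN_nonneg; auto].
    + apply eps_bnd; auto.
    + apply Rmult_le_compat_l; [apply C_nonneg| apply IH].
    + apply eps_bnd; auto.
Qed.

Lemma pow_diff_le m e : 0 <= m -> (m + 1) ^ S e - m ^ S e <= INR (S e) * (m + 1) ^ e.
Proof.
  intros Hm. induction e as [|e IH].
  - simpl. lra.
  - assert (m ^ S e <= (m + 1) ^ S e) by (apply pow_incr; lra).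
    replace ((m + 1) ^ S (S e) - m ^ S (S e)) with
      ((m + 1) * ((m + 1) ^ S e - m ^ S e) + m ^ S e) by (simpl; ring).
    replace (INR (S (S e)) * (m + 1) ^ S e) with
      ((m + 1) * (INR (S e) * (m + 1) ^ e) + (m + 1) ^ S e) by (rewrite (S_INR (S e)); simpl; ring).
    apply Rplus_le_compat; [apply Rmult_le_compat_l; lra| lra].
Qed.

Lemma sum_ge_last f N : (forall i, 0 <= f i) -> f N <= sum_f_R0 f N.
Proof.
  intros H. destruct N; simpl; [lra|].
  assert (0 <= sum_f_R0 f N) by (apply cond_pos_sum; auto). lra.
Qed.

Lemma C_S_n e : Binomial.C (S e) e = INR (S e).
Proof.
  unfold Binomial.C. replace (S e - e)%nat with 1%nat by lia.
  change (Factorial.fact (S e)) with (S e * Factorial.fact e)%nat.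
  rewrite mult_INR. simpl (Factorial.fact 1). simpl (INR 1).
  field. apply Rgt_not_eq, INR_fact_lt_0.
Qed.

Lemma NN_lower a n e : 1 < a -> (e <= n)%nat -> a ^ e * (INR n - INR e) ^ e <= NN a n e.
Proof.
  intros Ha. revert e. induction n as [|n IH]; intros e He.
  - replace e with 0%nat by lia. rewrite NN_0. simpl. lra.
  - destruct (Nat.eq_dec e (S n)) as [Heq|Hne].
    + subst e. replace (INR (S n) - INR (S n)) with 0 by ring. simpl.
      rewrite Rmult_0_l, Rmult_0_r. apply NN_nonneg; auto.
    + destruct e as [|e].
      * rewrite NN_S. simpl. rewrite C_n_0, eps_0.
        specialize (IH 0%nat ltac:(lia)). simpl in IH. lra.
      * rewrite NN_S. rewrite tech5. rewrite Nat.sub_diag, eps_0, C_n_n.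
        assert (Hlast := sum_ge_last (fun i => Binomial.C (S e) i * NN a n i * eps a (S e - i)) e).
        cbv beta in Hlast.
        replace (S e - e)%nat with 1%nat in Hlast by lia.
        rewrite eps_1, C_S_n in Hlast.
        assert (Hpos : forall i, 0 <= Binomial.C (S e) i * NN a n i * eps a (S e - i)).
        { intros i. apply Rmult_le_pos; [apply Rmult_le_pos|]; auto using C_nonneg, NN_nonneg.
          apply eps_bnd; auto. }
        specialize (Hlast Hpos).
        assert (IH1 := IH e ltac:(lia)). assert (IH2 := IH (S e) ltac:(lia)).
        set (m := INR n - INR (S e)).
        assert (Hm : 0 <= m).
        { unfold m. apply Rge_le, Rge_minus, Rle_ge, le_INR; lia. }
        replace (INR (S n) - INR (S e)) with (m + 1) in * by (unfold m; rewrite !S_INR; ring).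
        replace (INR n - INR e) with (m + 1) in IH1 by (unfold m; rewrite !S_INR; ring).
        fold m in IH2.
        assert (Hd := pow_diff_le m e Hm).
        assert (0 < a ^ e) by (apply pow_lt; lra).
        assert (a ^ S e * ((m + 1) ^ S e - m ^ S e) <= a ^ S e * (INR (S e) * (m + 1) ^ e)).
        { apply Rmult_le_compat_l; [left; apply pow_lt; lra| exact Hd]. }
        assert (INR (S e) * a * (a ^ e * (m + 1) ^ e) <= INR (S e) * a * NN a n e).
        { apply Rmult_le_compat_l; [apply Rmult_le_pos; [apply pos_INR| lra]| exact IH1]. }
        simpl pow in *. nra.
Qed.

Definition Xn (n j : nat) := 1 - 2 * INR j / INR n.
Definition T (a : R) (n : nat) (f : R -> R) :=
  sum_f_R0 (fun j => Ccoef n j a * f (Xn n j)) n.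
Definition nice (a : R) (f : R -> R) (B : R) :=
  (forall n, Rabs (T a n f) <= B) /\ is_lim_seq (fun n => T a n f) (f a).

Lemma T_ext a n f g : (forall x, f x = g x) -> T a n f = T a n g.
Proof. intros H. unfold T. apply sum_eq. intros; rewrite H; reflexivity. Qed.

Lemma nice_ext a f g B : (forall x, f x = g x) -> nice a f B -> nice a g B.
Proof.
  intros H [H1 H2]. split.
  - intros n. rewrite <- (T_ext _ _ _ _ H). auto.
  - rewrite <- H. eapply is_lim_seq_ext; [|exact H2]. intros n; apply T_ext; auto.
Qed.

Lemma T_0 a f : T a 0 f = f 1.
Proof.
  unfold T, Xn, Ccoef. simpl. rewrite C_n_0.
  replace (1 - 2 * 0 / 0) with 1 by (unfold Rdiv; rewrite Rmult_0_r, Rmult_0_l; ring). ring.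
Qed.

Lemma T_mom a n e : (1 <= n)%nat -> T a n (fun s => s ^ e) = NN a n e / INR n ^ e.
Proof.
  intros Hn. assert (Hn' : INR n <> 0) by (apply not_0_INR; lia).
  unfold T, NN, U, Rdiv. rewrite Rmult_comm, scal_sum. apply sum_eq. intros j _.
  unfold Ccoef, Xn, pp, qq.
  replace (1 - 2 * INR j / INR n) with ((INR n - 2 * INR j) * / INR n) by (field; auto).
  rewrite Rpow_mult_distr, pow_inv. ring.
Qed.

Lemma is_lim_seq_pow u (l : R) e : is_lim_seq u l -> is_lim_seq (fun n => u n ^ e) (l ^ e).
Proof.
  intros H. induction e as [|e IH].
  - simpl. apply is_lim_seq_const.
  - simpl. apply is_lim_seq_mult'; auto.
Qed.

Lemma nice_mom a e : 1 < a -> nice a (fun s => s ^ e * 1) (a ^ e * 1).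
Proof.
  intros Ha. rewrite (Rmult_1_r (a ^ e)). apply (nice_ext a (fun s => s ^ e)); [intros; ring|].
  assert (Hae : 1 <= a ^ e) by (apply pow_R1_Rle; lra).
  assert (Hbnd : forall n, (1 <= n)%nat -> 0 <= T a n (fun s => s ^ e) <= a ^ e).
  { intros n Hn. rewrite T_mom by auto.
    assert (0 < INR n ^ e) by (apply pow_lt, lt_0_INR; lia).
    split. apply Rmult_le_pos; [apply NN_nonneg; auto| left; apply Rinv_0_lt_compat; auto].
    apply (Rmult_le_reg_r (INR n ^ e)); auto. unfold Rdiv. rewrite Rmult_assoc, Rinv_l by lra.
    rewrite Rmult_1_r. apply NN_upper; auto. }
  split.
  - intros n. destruct n as [|n].
    + rewrite T_0. rewrite pow1, Rabs_R1. lra.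
    + rewrite Rabs_pos_eq; apply Hbnd; lia.
  - apply is_lim_seq_le_le_loc with (u := fun n => a ^ e * (1 - INR e * / INR n) ^ e)
      (w := fun n => a ^ e).
    + exists (S e). intros n Hn. split; [|apply Hbnd; lia].
      rewrite T_mom by lia.
      assert (Hn' : 0 < INR n) by (apply lt_0_INR; lia).
      assert (0 < INR n ^ e) by (apply pow_lt; lia || lra).
      replace (1 - INR e * / INR n) with ((INR n - INR e) * / INR n) by (field; lra).
      rewrite Rpow_mult_distr, pow_inv. unfold Rdiv. rewrite <- Rmult_assoc.
      apply Rmult_le_compat_r; [left; apply Rinv_0_lt_compat; auto|].
      apply NN_lower; auto; lia.
    + assert (HL : is_lim_seq (fun n => a ^ e * (1 - INR e * / INR n) ^ e) (a ^ e * (1 - INR e * 0) ^ e)).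
      { apply is_lim_seq_mult'. apply is_lim_seq_const.
        apply is_lim_seq_pow. apply is_lim_seq_minus'. apply is_lim_seq_const.
        apply is_lim_seq_mult'. apply is_lim_seq_const.
        replace (Finite 0) with (Rbar_inv p_infty) by reflexivity.
        apply is_lim_seq_inv. apply is_lim_seq_INR. discriminate. }
      rewrite Rmult_0_r, Rminus_0_r, pow1, Rmult_1_r in HL. exact HL.
    + apply is_lim_seq_const.
Qed.

Lemma T_scal a n c f : T a n (fun s => c * f s) = c * T a n f.
Proof. unfold T. rewrite scal_sum. apply sum_eq. intros; ring. Qed.

Lemma T_plus a n f g : T a n (fun s => f s + g s) = T a n f + T a n g.
Proof. unfold T. rewrite <- plus_sum. apply sum_eq. intros; ring. Qed.

Lemma nice_scal a c f B : nice a f B -> nice a (fun s => c * f s) (Rabs c * B).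
Proof.
  intros [H1 H2]. split.
  - intros n. rewrite T_scal, Rabs_mult. apply Rmult_le_compat_l; [apply Rabs_pos| auto].
  - eapply is_lim_seq_ext. intros n; symmetry; apply T_scal.
    apply is_lim_seq_mult'; [apply is_lim_seq_const| auto].
Qed.

Lemma nice_plus a f g B1 B2 : nice a f B1 -> nice a g B2 -> nice a (fun s => f s + g s) (B1 + B2).
Proof.
  intros [H1 H2] [H3 H4]. split.
  - intros n. rewrite T_plus. eapply Rle_trans; [apply Rabs_triang|]. apply Rplus_le_compat; auto.
  - eapply is_lim_seq_ext. intros n; symmetry; apply T_plus.
    apply is_lim_seq_plus'; auto.
Qed.

Lemma ser_lim w S : is_series w S -> is_lim_seq (fun N => sum_f_R0 w N) S.
Proof. intros H. eapply is_lim_seq_ext. intros; apply sum_n_Reals. exact H. Qed.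

Lemma series_fin_sum (g : nat -> nat -> R) (G : nat -> R) N :
  (forall j, is_series (g j) (G j)) ->
  is_series (fun m => sum_f_R0 (fun j => g j m) N) (sum_f_R0 G N).
Proof.
  intros H. induction N as [|N IH].
  - simpl. apply H.
  - simpl. apply (is_series_plus _ _ _ _ IH (H (S N))).
Qed.

Lemma T_series a n (fm : nat -> R -> R) f :
  (forall s, is_series (fun m => fm m s) (f s)) ->
  is_series (fun m => T a n (fm m)) (T a n f).
Proof.
  intros H. unfold T. apply (series_fin_sum (fun j m => Ccoef n j a * fm m (Xn n j))).
  intros j. apply (is_series_scal (Ccoef n j a) (fun m => fm m (Xn n j))). apply H.
Qed.

Lemma abs_sum_le w W N : (forall m, Rabs (w m) <= W m) -> Rabs (sum_f_R0 w N) <= sum_f_R0 W N.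
Proof.
  intros H. induction N as [|N IH]; simpl; auto.
  eapply Rle_trans; [apply Rabs_triang|]. apply Rplus_le_compat; auto.
Qed.

Lemma abs_series_le w W S SW :
  (forall m, Rabs (w m) <= W m) -> is_series w S -> is_series W SW -> Rabs S <= SW.
Proof.
  intros H H1 H2.
  assert (L1 := is_lim_seq_abs _ _ (ser_lim _ _ H1)).
  assert (L2 := ser_lim _ _ H2).
  assert (R := is_lim_seq_le _ _ _ _ (fun N => abs_sum_le w W N H) L1 L2). simpl in R. exact R.
Qed.

Lemma tail_le w W Sv SW M :
  (forall m, Rabs (w m) <= W m) -> is_series w Sv -> is_series W SW ->
  Rabs (Sv - sum_f_R0 w M) <= SW - sum_f_R0 W M.
Proof.
  intros H H1 H2.
  assert (Hle : forall N, Rabs (sum_f_R0 w (N + M) - sum_f_R0 w M) <= sum_f_R0 W (N + M) - sum_f_R0 W M).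
  { induction N as [|N IH].
    - simpl. rewrite !Rminus_diag, Rabs_R0. lra.
    - change (S N + M)%nat with (S (N + M)). rewrite !tech5.
      replace (sum_f_R0 w (N + M) + w (S (N + M)) - sum_f_R0 w M) with
        ((sum_f_R0 w (N + M) - sum_f_R0 w M) + w (S (N + M))) by ring.
      eapply Rle_trans; [apply Rabs_triang|]. specialize (H (S (N + M))). lra. }
  assert (L1 : is_lim_seq (fun N => Rabs (sum_f_R0 w (N + M) - sum_f_R0 w M)) (Rabs (Sv - sum_f_R0 w M))).
  { apply (is_lim_seq_abs _ (Finite (Sv - sum_f_R0 w M))). apply is_lim_seq_minus'; [|apply is_lim_seq_const].
    apply (is_lim_seq_incr_n (fun N => sum_f_R0 w N)). apply ser_lim; auto. }
  assert (L2 : is_lim_seq (fun N => sum_f_R0 W (N + M) - sum_f_R0 W M) (SW - sum_f_R0 W M)).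
  { apply is_lim_seq_minus'; [|apply is_lim_seq_const].
    apply (is_lim_seq_incr_n (fun N => sum_f_R0 W N)). apply ser_lim; auto. }
  assert (R := is_lim_seq_le _ _ _ _ Hle L1 L2). simpl in R. exact R.
Qed.

Lemma lim_fin_sum (u : nat -> nat -> R) (v : nat -> R) M :
  (forall m, is_lim_seq (u m) (v m)) ->
  is_lim_seq (fun n => sum_f_R0 (fun m => u m n) M) (sum_f_R0 v M).
Proof.
  intros H. induction M as [|M IH]; simpl; auto.
  apply is_lim_seq_plus'; auto.
Qed.

Lemma tannery (u : nat -> nat -> R) (v U Sv : nat -> R) SU V :
  (forall m n, Rabs (u m n) <= U m) -> is_series U SU ->
  (forall m, is_lim_seq (u m) (v m)) ->
  (forall n, is_series (fun m => u m n) (Sv n)) -> is_series v V ->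
  is_lim_seq Sv V.
Proof.
  intros HU HSU Hlim HS HV.
  assert (Hv : forall m, Rabs (v m) <= U m).
  { intros m. assert (R := is_lim_seq_le _ _ _ _ (fun n => HU m n)
       (is_lim_seq_abs _ _ (Hlim m)) (is_lim_seq_const (U m))). simpl in R. exact R. }
  apply is_lim_seq_spec. intros eps.
  assert (He3 : 0 < eps / 3) by (destruct eps; simpl; lra).
  assert (LU := ser_lim _ _ HSU). apply is_lim_seq_spec in LU.
  destruct (LU (mkposreal _ He3)) as [M HM]. specialize (HM M (le_n M)). simpl in HM.
  assert (LF := lim_fin_sum u v M Hlim). apply is_lim_seq_spec in LF.
  destruct (LF (mkposreal _ He3)) as [N HN]. exists N. intros n Hn. specialize (HN n Hn). simpl in HN.
  assert (T1 := tail_le (fun m => u m n) U (Sv n) SU M (fun m => HU m n) (HS n) HSU).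
  assert (T2 := tail_le v U V SU M Hv HV HSU).
  assert (SU - sum_f_R0 U M < eps / 3) by (rewrite Rabs_minus_sym in HM; apply Rabs_def2 in HM; lra).
  replace (Sv n - V) with ((Sv n - sum_f_R0 (fun m => u m n) M) +
     (sum_f_R0 (fun m => u m n) M - sum_f_R0 v M) - (V - sum_f_R0 v M)) by ring.
  eapply Rle_lt_trans; [apply Rabs_triang|]. rewrite Rabs_Ropp.
  eapply Rle_lt_trans; [apply Rplus_le_compat_r, Rabs_triang|]. lra.
Qed.

Lemma nice_series a (fm : nat -> R -> R) (Bm : nat -> R) SB f :
  (forall m, nice a (fm m) (Bm m)) -> is_series Bm SB ->
  (forall s, is_series (fun m => fm m s) (f s)) -> nice a f SB.
Proof.
  intros Hn HB Hs. split.
  - intros n. apply (abs_series_le (fun m => T a n (fm m)) Bm); auto.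
    + intros m. apply Hn.
    + apply T_series; auto.
  - apply (tannery (fun m n => T a n (fm m)) (fun m => fm m a) Bm (fun n => T a n f) SB).
    + intros m n. apply Hn.
    + auto.
    + intros m. apply Hn.
    + intros n. apply T_series; auto.
    + auto.
Qed.

Definition good a (h : R -> R) K := forall e, nice a (fun s => s ^ e * h s) (a ^ e * K).
Definition goodE a h := exists K, good a h K.

Lemma nice_beq a f B B' : B = B' -> nice a f B -> nice a f B'.
Proof. intros ->; auto. Qed.

Lemma goodE_one a : 1 < a -> goodE a (fun _ => 1).
Proof. intros Ha. exists 1. intros e. apply nice_mom; auto. Qed.

Lemma goodE_ext a h h' : (forall s, h s = h' s) -> goodE a h -> goodE a h'.
Proof.
  intros H [K HK]. exists K. intros e. eapply nice_ext; [|apply HK]. intros s; simpl; rewrite H; auto.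
Qed.

Lemma goodE_scal a c h : goodE a h -> goodE a (fun s => c * h s).
Proof.
  intros [K HK]. exists (Rabs c * K). intros e.
  apply nice_beq with (Rabs c * (a ^ e * K)); [ring|].
  eapply nice_ext; [|apply (nice_scal a c _ _ (HK e))].
  intros s; simpl; ring.
Qed.

Lemma goodE_plus a h g : goodE a h -> goodE a g -> goodE a (fun s => h s + g s).
Proof.
  intros [K HK] [K' HK']. exists (K + K'). intros e.
  apply nice_beq with (a ^ e * K + a ^ e * K'); [ring|].
  eapply nice_ext; [|apply (nice_plus a _ _ _ _ (HK e) (HK' e))].
  intros s; simpl; ring.
Qed.

Lemma goodE_shift a h : goodE a h -> goodE a (fun s => s * h s).
Proof.
  intros [K HK]. exists (a * K). intros e.
  apply nice_beq with (a ^ S e * K); [simpl; ring|].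
  eapply nice_ext; [|apply (HK (S e))].
  intros s; simpl; ring.
Qed.

Lemma goodE_layer a h (phi : nat -> R) (lam : R) (L : nat) (F : R -> R) :
  goodE a h ->
  (forall s, is_series (fun m => phi m * (lam * s ^ L) ^ m) (F s)) ->
  ex_series (fun m => Rabs (phi m) * (Rabs lam * a ^ L) ^ m) ->
  goodE a (fun s => F s * h s).
Proof.
  intros [K HK] HF Hex.
  set (Sr := Series (fun m => Rabs (phi m) * (Rabs lam * a ^ L) ^ m)).
  assert (HSr := Series_correct _ Hex). fold Sr in HSr.
  exists (K * Sr). intros e.
  apply nice_beq with (a ^ e * K * Sr); [ring|].
  apply (nice_series a (fun m s => (phi m * lam ^ m) * (s ^ (e + L * m) * h s))
           (fun m => Rabs (phi m * lam ^ m) * (a ^ (e + L * m) * K))).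
  - intros m. apply nice_scal. apply HK.
  - eapply is_series_ext; [|apply (is_series_scal (a ^ e * K) _ _ HSr)].
    intros m. unfold scal; simpl; unfold mult; simpl.
    rewrite Rabs_mult, <- RPow_abs, pow_add, pow_mult, Rpow_mult_distr. ring.
  - intros s. replace (s ^ e * (F s * h s)) with (scal (s ^ e * h s) (F s))
      by (unfold scal; simpl; unfold mult; simpl; ring).
    eapply is_series_ext; [|apply (is_series_scal (s ^ e * h s) _ _ (HF s))].
    intros m. unfold scal; simpl; unfold mult; simpl.
    rewrite pow_add, pow_mult, Rpow_mult_distr. ring.
Qed.

Lemma exp_ser x : is_series (fun m => / INR (fact m) * x ^ m) (exp x).
Proof. apply is_series_Reals. unfold exp. destruct (exist_exp x) as [l Hl]. simpl. exact Hl. Qed.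

Lemma exp_ex rho : ex_series (fun m => Rabs (/ INR (fact m)) * rho ^ m).
Proof.
  exists (exp rho). eapply is_series_ext; [|apply exp_ser]. intros m.
  rewrite Rabs_pos_eq; auto. left; apply Rinv_0_lt_compat, INR_fact_lt_0.
Qed.

Lemma fact_cmp_ex (g : nat -> nat) rho : 0 <= rho -> (forall i, (i <= g i)%nat) ->
  ex_series (fun i => Rabs ((-1) ^ i / INR (fact (g i))) * rho ^ i).
Proof.
  intros Hr Hg. apply (@ex_series_le R_AbsRing R_CompleteNormedModule _ (fun m => Rabs (/ INR (fact m)) * rho ^ m)); [|apply exp_ex].
  intros i. change norm with Rabs. simpl.
  assert (E : Rabs ((-1) ^ i / INR (fact (g i))) = / INR (fact (g i))).
  { unfold Rdiv. rewrite Rabs_mult, <- RPow_abs, Rabs_m1, pow1, Rmult_1_l.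
    apply Rabs_pos_eq. left; apply Rinv_0_lt_compat, INR_fact_lt_0. }
  rewrite E. rewrite (Rabs_pos_eq (/ INR (fact i))) by (left; apply Rinv_0_lt_compat, INR_fact_lt_0).
  rewrite Rabs_pos_eq.
  2:{ apply Rmult_le_pos; [left; apply Rinv_0_lt_compat, INR_fact_lt_0| apply pow_le; auto]. }
  apply Rmult_le_compat_r; [apply pow_le; auto|].
  apply Rinv_le_contravar; [apply INR_fact_lt_0|]. apply le_INR, fact_le, Hg.
Qed.

Lemma goodE_exp a h lam L : goodE a h -> goodE a (fun s => exp (lam * s ^ L) * h s).
Proof.
  intros H. apply (goodE_layer a h (fun m => / INR (fact m)) lam L); auto.
  - intros s; apply exp_ser.
  - apply exp_ex.
Qed.

Lemma goodE_cos a h D : 1 < a -> goodE a h -> goodE a (fun s => cos (D * s) * h s).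
Proof.
  intros Ha H. apply (goodE_layer a h cos_n (D * D) 2); auto.
  - intros s. apply is_series_Reals. unfold cos. destruct (exist_cos (Rsqr (D * s))) as [l Hl].
    unfold cos_in in Hl. replace (D * D * s ^ 2) with (Rsqr (D * s)) by (unfold Rsqr; ring). exact Hl.
  - apply fact_cmp_ex; [|intros; lia]. apply Rmult_le_pos; [apply Rabs_pos| apply pow_le; lra].
Qed.

Lemma goodE_sin a h D : 1 < a -> goodE a h -> goodE a (fun s => sin (D * s) * h s).
Proof.
  intros Ha H.
  set (Sf := fun s => proj1_sig (exist_sin (Rsqr (D * s)))).
  assert (H1 : goodE a (fun s => Sf s * h s)).
  { apply (goodE_layer a h sin_n (D * D) 2); auto.
    - intros s. apply is_series_Reals. unfold Sf. destruct (exist_sin (Rsqr (D * s))) as [l Hl].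
      unfold sin_in in Hl. cbn [proj1_sig].
      replace (D * D * s ^ 2) with (Rsqr (D * s)) by (unfold Rsqr; ring). exact Hl.
    - apply fact_cmp_ex; [|intros; lia]. apply Rmult_le_pos; [apply Rabs_pos| apply pow_le; lra]. }
  apply goodE_shift in H1. apply (goodE_scal a D) in H1.
  eapply goodE_ext; [|exact H1]. intros s. simpl.
  unfold sin, Sf. destruct (exist_sin (Rsqr (D * s))). simpl. ring.
Qed.

Definition cc (s : R) : C := (0, - s / sqrt 2).
Definition ww (z : C) (s : R) : C := Cminus (Cmult z (Cconj (cc s))) (RtoC (Cmod (cc s) ^ 2 / 2)).
Definition QQ (z : C) (k : nat) (s : R) : C := Cmult (pow_n (Cminus z (cc s)) k) (Cexp (ww z s)).

Lemma s2 : sqrt 2 ^ 2 = 2.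
Proof. apply pow2_sqrt. lra. Qed.

Lemma Cexp_ww z s : Cexp (ww z s) =
  (exp (- snd z / sqrt 2 * s ^ 1) * (exp (- / 4 * s ^ 2) * (cos (fst z / sqrt 2 * s) * 1)),
   exp (- snd z / sqrt 2 * s ^ 1) * (exp (- / 4 * s ^ 2) * (sin (fst z / sqrt 2 * s) * 1))).
Proof.
  assert (Hs := sqrt2_neq_0). assert (H2 := s2).
  assert (Hre : Re (ww z s) = - snd z / sqrt 2 * s ^ 1 + - / 4 * s ^ 2).
  { destruct z as [zx zy]. unfold ww, Re, Cminus, Cplus, Copp, Cmult, Cconj, cc, RtoC, Cmod. cbn [fst snd].
    rewrite pow2_sqrt by nra. replace ((- s / sqrt 2) ^ 2) with (s ^ 2 / sqrt 2 ^ 2) by (field; auto). rewrite H2. field. auto. }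
  assert (Him : Im (ww z s) = fst z / sqrt 2 * s).
  { destruct z as [zx zy]. unfold ww, Im, Cminus, Cplus, Copp, Cmult, Cconj, cc, RtoC. cbn [fst snd].
    field. auto. }
  unfold Cexp. rewrite Hre, Him, exp_plus. f_equal; ring.
Qed.

Lemma QQ_good a z k : 1 < a -> goodE a (fun s => fst (QQ z k s)) /\ goodE a (fun s => snd (QQ z k s)).
Proof.
  intros Ha. assert (Hs := sqrt2_neq_0).
  assert (E1 := goodE_exp a _ (- snd z / sqrt 2) 1 (goodE_exp a _ (- / 4) 2 (goodE_cos a _ (fst z / sqrt 2) Ha (goodE_one a Ha)))).
  assert (E2 := goodE_exp a _ (- snd z / sqrt 2) 1 (goodE_exp a _ (- / 4) 2 (goodE_sin a _ (fst z / sqrt 2) Ha (goodE_one a Ha)))).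
  induction k as [|k [IH1 IH2]].
  - split.
    + eapply goodE_ext; [|exact E1]. intros s. unfold QQ. rewrite Cexp_ww. simpl. ring.
    + eapply goodE_ext; [|exact E2]. intros s. unfold QQ. rewrite Cexp_ww. simpl. ring.
  - assert (HQ : forall s, QQ z (S k) s = Cmult (Cminus z (cc s)) (QQ z k s)).
    { intros s. unfold QQ. rewrite Cmult_assoc. reflexivity. }
    split.
    + apply (goodE_scal a (fst z)) in IH1 as G1.
      apply (goodE_scal a (- snd z)) in IH2 as G2.
      apply goodE_shift in IH2 as G3. apply (goodE_scal a (- / sqrt 2)) in G3.
      eapply goodE_ext; [|exact (goodE_plus a _ _ (goodE_plus a _ _ G1 G2) G3)].
      intros s. rewrite HQ. destruct (QQ z k s) as [u v]. destruct z as [zx zy].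
      unfold Cmult, Cminus, Cplus, Copp, cc. cbn [fst snd]. field. auto.
    + apply (goodE_scal a (fst z)) in IH2 as G1.
      apply (goodE_scal a (snd z)) in IH1 as G2.
      apply goodE_shift in IH1 as G3. apply (goodE_scal a (/ sqrt 2)) in G3.
      eapply goodE_ext; [|exact (goodE_plus a _ _ (goodE_plus a _ _ G1 G2) G3)].
      intros s. rewrite HQ. destruct (QQ z k s) as [u v]. destruct z as [zx zy].
      unfold Cmult, Cminus, Cplus, Copp, cc. cbn [fst snd]. field. auto.
Qed.

Lemma Weyl_QQ z k s :
  Weyl (cc s) (e_k k) z = (fst (QQ z k s) / sqrt (INR (fact k)), snd (QQ z k s) / sqrt (INR (fact k))).
Proof.
  assert (Hr : 0 < sqrt (INR (fact k))) by (apply sqrt_lt_R0, INR_fact_lt_0).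
  unfold Weyl, e_k, QQ. fold (ww z s).
  destruct (pow_n (Cminus z (cc s)) k) as [x y]. destruct (Cexp (ww z s)) as [u v].
  cbv [Cmult Cdiv Cinv RtoC fst snd]. f_equal; field; repeat split; try lra; nra.
Qed.

Lemma nice_Weyl a z k : 1 < a ->
  (exists B, nice a (fun s => fst (Weyl (cc s) (e_k k) z)) B) /\
  (exists B, nice a (fun s => snd (Weyl (cc s) (e_k k) z)) B).
Proof.
  intros Ha. destruct (QQ_good a z k Ha) as [G1 G2].
  apply (goodE_scal a (/ sqrt (INR (fact k)))) in G1, G2.
  destruct G1 as [K1 H1], G2 as [K2 H2]. split.
  - exists (a ^ 0 * K1). eapply nice_ext; [|apply (H1 0%nat)]. intros s. rewrite Weyl_QQ. simpl. field.
    apply Rgt_not_eq, sqrt_lt_R0, INR_fact_lt_0.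
  - exists (a ^ 0 * K2). eapply nice_ext; [|apply (H2 0%nat)]. intros s. rewrite Weyl_QQ. simpl. field.
    apply Rgt_not_eq, sqrt_lt_R0, INR_fact_lt_0.
Qed.

Lemma fst_sum_n (f : nat -> C) n : fst (sum_n f n) = sum_f_R0 (fun j => fst (f j)) n.
Proof.
  induction n as [|n IH].
  - rewrite sum_O. reflexivity.
  - rewrite sum_Sn. simpl. rewrite <- IH. reflexivity.
Qed.

Lemma snd_sum_n (f : nat -> C) n : snd (sum_n f n) = sum_f_R0 (fun j => snd (f j)) n.
Proof.
  induction n as [|n IH].
  - rewrite sum_O. reflexivity.
  - rewrite sum_Sn. simpl. rewrite <- IH. reflexivity.
Qed.

Theorem theorem3p24 (a : R) (k : nat) (z : Complex.C) :
  1 < a ->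
  filterlim
    (fun n : nat =>
       sum_n (fun j : nat => Cmult (RtoC (Ccoef n j a)) (Weyl (bj n j) (e_k k) z)) n)
    eventually
    (locally (Weyl (bval a) (e_k k) z)).
Proof.
  intros Ha. destruct (nice_Weyl a z k Ha) as [[B1 [_ L1]] [B2 [_ L2]]].
  apply filterlim_locally. intros eps.
  apply is_lim_seq_spec in L1. apply is_lim_seq_spec in L2.
  destruct (L1 eps) as [N1 H1]. destruct (L2 eps) as [N2 H2].
  exists (max N1 N2). intros n Hn. split.
  - change (Rabs (fst (sum_n (fun j : nat => Cmult (RtoC (Ccoef n j a)) (Weyl (bj n j) (e_k k) z)) n)
                 - fst (Weyl (bval a) (e_k k) z)) < eps).
    rewrite fst_sum_n.
    specialize (H1 n ltac:(lia)). unfold T in H1.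
    replace (sum_f_R0 _ n) with (sum_f_R0 (fun j => Ccoef n j a * fst (Weyl (cc (Xn n j)) (e_k k) z)) n).
    + exact H1.
    + apply sum_eq. intros j _. unfold RtoC, Cmult. cbn [fst snd]. change (bj n j) with (cc (Xn n j)). ring.
  - change (Rabs (snd (sum_n (fun j : nat => Cmult (RtoC (Ccoef n j a)) (Weyl (bj n j) (e_k k) z)) n)
                 - snd (Weyl (bval a) (e_k k) z)) < eps).
    rewrite snd_sum_n.
    specialize (H2 n ltac:(lia)). unfold T in H2.
    replace (sum_f_R0 _ n) with (sum_f_R0 (fun j => Ccoef n j a * snd (Weyl (cc (Xn n j)) (e_k k) z)) n).
    + exact H2.
    + apply sum_eq. intros j _. unfold RtoC, Cmult. cbn [fst snd]. change (bj n j) with (cc (Xn n j)). ring.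
Qed.
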